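(* Let $H=(T_1,\dots,T_n,p_1,\dots,p_n)$ be any strategic game. Then for the operator $\overline{GS}$ on the lattice of restrictions of $H$: (i) the largest fixpoint of $\overline{GS}$ exists and equals its outcome; (ii) $\overline{GS}$ is order independent; (iii) for every relaxation $R$ of $\overline{GS}$ and every ordinal $\alpha$, $\overline{GS}^{\alpha}\subseteq R^{\alpha}$.
   Context: A strategic game $H=(T_1,\dots,T_n,p_1,\dots,p_n)$ has nonempty strategy sets $T_i$ and payoffs $p_i:T_1\times\dots\times T_n\to\mathbb R$. A restriction is $G=(S_1,\dots,S_n)$ with $S_i\subseteq T_i$ (possibly empty), ordered by componentwise inclusion (a complete lattice with top $H$). For $s_i,s_i'\in T_i$, $s_i'\succ_G s_i$ means $p_i(s_i',s_{-i})>p_i(s_i,s_{-i})$ for all $s_{-i}\in S_{-i}:=\prod_{j\ne i}S_j$ (vacuously true if $S_{-i}=\emptyset$). $GS(G):=(S_1',\dots,S_n')$ with $S_i':=\{s_i\in T_i\mid\neg\exists s_i'\in T_i:\ s_i'\succ_G s_i\}$, and $\overline{GS}(G):=GS(G)\cap G$. Operator notions: fixpoint $T(G)=G$; iterations $T^0:=H$, $T^{\alpha+1}:=T(T^\alpha)$, $T^\beta:=\bigcap_{\alpha<\beta}T^\alpha$ for limit $\beta$; outcome $T^{\alpha_T}$ with $\alpha_T$ the least $\alpha$ such that $T^{\alpha+1}=T^\alpha$. $R$ is a relaxation of $T$ if for all ordinals $\alpha$: (1) $T(R^\alpha)\subseteq R(R^\alpha)$; (2) if $T(R^\alpha)\subseteq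 R^\alpha$ then $R(R^\alpha)\subseteq R^\alpha$; (3) if $R(R^\alpha)=R^\alpha$ then $T(R^\alpha)=R^\alpha$. $T$ is order independent if the set of outcomes of relaxations of $T$ has at most one element. *)

(* Defs.v *)
From Stdlib Require Import Reals.
From Stdlib Require Fin.
Open Scope R_scope.

Section Game.
Context {n : nat} (T : Fin.t n -> Type).

Definition restr : Type := forall i : Fin.t n, T i -> Prop.

Definition rtop : restr := fun _ _ => True.

Definition rsub (G G' : restr) : Prop := forall i (x : T i), G i x -> G' i x.

Definition rcap (G G' : restr) : restr := fun i x => G i x /\ G' i x.

Definition upd (s : forall j, T j) (i : Fin.t n) (x : T i) : forall j, T j :=
  fun j => match Fin.eq_dec i j with
           | left e => eq_rect i T x j e
           | right _ => s j
           end.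

Variable p : forall i : Fin.t n, (forall j, T j) -> R.

(** s_i' ≻_G s_i : for all s_{-i} in S_{-i}, p_i(s_i', s_{-i}) > p_i(s_i, s_{-i}).
    s_{-i} is represented by a full profile s whose coordinates j <> i lie in S_j
    (the i-th coordinate is overwritten); vacuous iff some S_j (j<>i) is empty. *)
Definition sdom (G : restr) (i : Fin.t n) (x' x : T i) : Prop :=
  forall s : forall j, T j, (forall j, j <> i -> G j (s j)) ->
    p i (upd s i x') > p i (upd s i x).

Definition GS (G : restr) : restr := fun i x => ~ exists x' : T i, sdom G i x' x.

Definition GSbar (G : restr) : restr := rcap (GS G) G.

End Game.

(** Well-ordered types; an element w of a well-order represents the ordinal
    (order type) of its initial segment {v | v < w}.  Every ordinal arises so. *)
Record wellorder : Type := {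
  wo_car :> Type;
  wo_lt : wo_car -> wo_car -> Prop;
  wo_wf : well_founded wo_lt;
  wo_trans : forall x y z, wo_lt x y -> wo_lt y z -> wo_lt x z;
  wo_total : forall x y, wo_lt x y \/ x = y \/ wo_lt y x
}.

Section Iter.
Context {n : nat} {T : Fin.t n -> Type}.

(** f is the transfinite iteration of the operator Op along the well-order W:
    f w = Op^{alpha} where alpha is the order type of {v | v < w}:
    T^0 = H, T^{alpha+1} = T(T^alpha), T^beta = ⋂_{alpha<beta} T^alpha (beta limit). *)
Definition IsIter (Op : restr T -> restr T) (W : wellorder) (f : W -> restr T) : Prop :=
  forall w : W,
    ((forall v, ~ wo_lt W v w) -> f w = rtop T) /\
    (forall v, wo_lt W v w -> (forall u, ~ (wo_lt W v u /\ wo_lt W u w)) ->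
       f w = Op (f v)) /\
    ((exists v, wo_lt W v w) ->
     (forall v, wo_lt W v w -> exists u, wo_lt W v u /\ wo_lt W u w) ->
       f w = (fun i x => forall v, wo_lt W v w -> f v i x)).

Definition IsIterate (Op : restr T -> restr T) (X : restr T) : Prop :=
  exists (W : wellorder) (f : W -> restr T) (w : W), IsIter Op W f /\ f w = X.

Definition outcome (Op : restr T -> restr T) (G : restr T) : Prop :=
  exists (W : wellorder) (f : W -> restr T) (w : W),
    IsIter Op W f /\ f w = G /\ Op G = G /\
    (forall v, wo_lt W v w -> Op (f v) <> f v).

(** R is a relaxation of Top (conditions (1)-(3) for every ordinal alpha) *)
Definition relaxation (Top R : restr T -> restr T) : Prop :=
  forall X, IsIterate R X ->
    rsub T (Top X) (R X) /\
    (rsub T (Top X) X -> rsub T (R X) X) /\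
    (R X = X -> Top X = X).

Definition order_independent (Top : restr T -> restr T) : Prop :=
  forall R1 R2 G1 G2, relaxation Top R1 -> relaxation Top R2 ->
    outcome R1 G1 -> outcome R2 G2 -> G1 = G2.

End Iter.

(* Main.v *)
Require Import Defs.
From Stdlib Require Import Reals.
From Stdlib Require Fin.
From Stdlib Require Import Classical FunctionalExtensionality PropExtensionality ProofIrrelevance.

Section S.
Variables (n : nat) (T : Fin.t n -> Type) (p : forall i : Fin.t n, (forall j, T j) -> R).

Local Notation F := (GSbar T p).
Local Notation sub A B := (forall i (x : T i), A i x -> B i x).

Lemma restr_ext (A B : restr T) : sub A B -> sub B A -> A = B.
Proof.
  intros h1 h2. apply functional_extensionality_dep; intro i.
  apply functional_extensionality; intro x.
  apply propositional_extensionality; split; auto.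
Qed.

Lemma mono A B : sub A B -> sub (F A) (F B).
Proof.
  intros h i x [hgs hx]. split; [|auto].
  intros [x' hd]. apply hgs. exists x'. intros s hs. apply hd.
  intros j hj. apply h. auto.
Qed.

Lemma contr A : sub (F A) A.
Proof. intros i x [_ h]; exact h. Qed.

Inductive tower : restr T -> Prop :=
| tw_step Y : tower Y -> tower (F Y)
| tw_meet (Fm : restr T -> Prop) : (forall Y, Fm Y -> tower Y) ->
    tower (fun i x => forall Y, Fm Y -> Y i x).

Lemma tw_top : tower (rtop T).
Proof.
  rewrite (restr_ext (rtop T) (fun i x => forall Y : restr T, False -> Y i x)).
  - apply tw_meet; intros; contradiction.
  - intros i x _ Y [].
  - intros i x _; exact I.
Qed.

Lemma fix_below G : sub G (F G) -> forall Y, tower Y -> sub G Y.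
Proof.
  intros hG Y HY. induction HY as [Z HZ IH| Fm H IH].
  - intros i x hx. apply (mono _ _ IH). apply hG. exact hx.
  - intros i x hx Y hY. apply (IH Y hY). exact hx.
Qed.

Definition extreme X := forall Y, tower Y -> sub X Y -> ~ sub Y X -> sub X (F Y).

Lemma lem1 X : tower X -> extreme X -> forall Y, tower Y -> sub Y (F X) \/ sub X Y.
Proof.
  intros HX EX Y HY. induction HY as [Z HZ IH| Fm H IH].
  - destruct IH as [h|h].
    + left. intros i x hx. apply h. apply contr. exact hx.
    + destruct (classic (sub Z X)) as [h'|h'].
      * left. apply mono. exact h'.
      * right. apply EX; auto.
  - destruct (classic (exists Z, Fm Z /\ sub Z (F X))) as [[Z [HZ hZ]]|hno].
    + left. intros i x hx. apply hZ. apply hx. exact HZ.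
    + right. intros i x hx Z HZ. destruct (IH Z HZ) as [h|h].
      * exfalso. apply hno. eauto.
      * apply h. exact hx.
Qed.

Lemma lem2 X : tower X -> extreme X.
Proof.
  intros HX. induction HX as [Z HZ IH| Fm H IH].
  - intros Y HY h1 h2. destruct (lem1 Z HZ IH Y HY) as [h|h].
    + exfalso. apply h2. exact h.
    + apply mono. exact h.
  - intros Y HY h1 h2.
    destruct (classic (exists Z, Fm Z /\ ~ sub Y Z)) as [[Z [HZ hn]]|hno].
    + destruct (lem1 Z (H Z HZ) (IH Z HZ) Y HY) as [h|h].
      * exfalso. apply hn. intros i x hx. apply contr. apply h. exact hx.
      * intros i x hx. apply (IH Z HZ Y HY h hn). apply hx. exact HZ.
    + exfalso. apply h2. intros i x hx Z HZ.
      destruct (classic (sub Y Z)) as [h|h]; [apply h; exact hx|].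
      exfalso. apply hno. eauto.
Qed.

Lemma cor X Y : tower X -> tower Y -> sub Y (F X) \/ sub X Y.
Proof. intros HX HY. exact (lem1 X HX (lem2 X HX) Y HY). Qed.

Lemma linear X Y : tower X -> tower Y -> sub X Y \/ sub Y X.
Proof.
  intros HX HY. destruct (cor X Y HX HY) as [h|h]; [right|left; exact h].
  intros i x hx. apply contr. apply h. exact hx.
Qed.

Definition car := {X : restr T | tower X}.
Definition lt (a b : car) : Prop :=
  sub (proj1_sig b) (proj1_sig a) /\ ~ sub (proj1_sig a) (proj1_sig b).

Lemma acc_equiv (a b : car) : Acc lt a -> sub (proj1_sig b) (proj1_sig a) ->
  sub (proj1_sig a) (proj1_sig b) -> Acc lt b.
Proof.
  intros [Ha] h1 h2. constructor. intros c [c1 c2]. apply Ha. split.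
  - intros i x hx. apply c1. apply h2. exact hx.
  - intros hc. apply c2. intros i x hx. apply h2. apply hc. exact hx.
Qed.

Lemma tower_acc X : tower X -> forall H : tower X, Acc lt (exist _ X H).
Proof.
  intros HX. induction HX as [Z HZ IH| Fm H IH]; intros H0.
  - constructor. intros [v Hv] [h1 h2]. simpl in h1, h2.
    destruct (cor Z v HZ Hv) as [h|h]; [contradiction|].
    destruct (classic (sub v Z)) as [h'|h'].
    + apply (acc_equiv (exist _ Z HZ)); simpl; auto.
    + destruct (IH HZ) as [a]. apply a. split; simpl; auto.
  - constructor. intros [v Hv] [h1 h2]. simpl in h1, h2.
    destruct (classic (exists Z, Fm Z /\ ~ sub v Z)) as [[Z [HZ hn]]|hno].
    + destruct (linear Z v (H Z HZ) Hv) as [h|h]; [|contradiction].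
      destruct (IH Z HZ (H Z HZ)) as [a]. apply a. split; simpl; auto.
    + exfalso. apply h2. intros i x hx Z HZ.
      destruct (classic (sub v Z)) as [h|h]; [apply h; exact hx|].
      exfalso. apply hno. eauto.
Qed.

Lemma lt_wf : well_founded lt.
Proof. intros [X H]. apply tower_acc. exact H. Qed.

Lemma lt_trans : forall x y z, lt x y -> lt y z -> lt x z.
Proof.
  intros [x Hx] [y Hy] [z Hz] [a1 a2] [b1 b2]; simpl in *. split; simpl.
  - intros i w hw. apply a1, b1, hw.
  - intros h. apply b2. intros i w hw. apply h. apply a1. exact hw.
Qed.

Lemma lt_total : forall x y, lt x y \/ x = y \/ lt y x.
Proof.
  intros [a Ha] [b Hb]. unfold lt; simpl.
  destruct (linear a b Ha Hb) as [h|h].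
  - destruct (classic (sub b a)) as [h'|h'].
    + right; left. assert (e : a = b) by (apply restr_ext; auto). subst.
      f_equal. apply proof_irrelevance.
    + right; right. auto.
  - destruct (classic (sub a b)) as [h'|h'].
    + right; left. assert (e : a = b) by (apply restr_ext; auto). subst.
      f_equal. apply proof_irrelevance.
    + left. auto.
Qed.

Definition Wt : wellorder := Build_wellorder car lt lt_wf lt_trans lt_total.

Lemma tower_iter : IsIter F Wt (fun a : Wt => proj1_sig a).
Proof.
  intros [w Hw]. split; [|split].
  - intros Hno. simpl. apply restr_ext; [intros; exact I|].
    apply NNPP; intro hn. apply (Hno (exist _ (rtop T) tw_top)).
    split; simpl; [intros; exact I| exact hn].
  - intros [v Hv] [h1 h2] Hi. simpl in *.
    destruct (cor v w Hv Hw) as [hw|hw]; [|contradiction].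
    apply restr_ext; auto. apply NNPP; intro hn.
    destruct (classic (sub v (F v))) as [hfix|hnf].
    + apply h2. apply (fix_below v hfix w Hw).
    + apply (Hi (exist _ (F v) (tw_step v Hv))). split; split; simpl; auto.
      apply contr.
  - intros _ Hlim. simpl. apply restr_ext.
    + intros i x hx [v Hv] [h1 h2]; simpl in *. apply h1; exact hx.
    + set (Mfam := fun Y => tower Y /\ sub w Y /\ ~ sub Y w).
      assert (HM : tower (fun i x => forall Y, Mfam Y -> Y i x)).
      { apply tw_meet. intros Y h. exact (proj1 h). }
      assert (hMw : sub (fun i x => forall Y, Mfam Y -> Y i x) w).
      { apply NNPP; intro hn.
        destruct (linear _ w HM Hw) as [h|h]; [contradiction|].
        destruct (Hlim (exist _ _ HM)) as [[u Hu] [[u1 u2] [u3 u4]]].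
        { split; simpl; auto. }
        simpl in *. apply u2. intros i x hx. apply hx. split; auto. }
      intros i x hx. apply hMw. intros Y [HY [h1 h2]].
      apply (hx (exist _ Y HY)). split; simpl; auto.
Qed.

Lemma domA (Rr : restr T -> restr T) (HR : relaxation F Rr) (W : wellorder)
  (g : W -> restr T) (Hg : IsIter Rr W g) (h : W -> restr T)
  (Hs : forall w v, wo_lt W v w -> (forall u, ~ (wo_lt W v u /\ wo_lt W u w)) ->
        sub (h w) (F (h v)))
  (Hl : forall w, (exists v, wo_lt W v w) ->
        (forall v, wo_lt W v w -> exists u, wo_lt W v u /\ wo_lt W u w) ->
        forall v, wo_lt W v w -> sub (h w) (h v)) :
  forall w, sub (h w) (g w).
Proof.
  intro w. induction w as [w IH] using (well_founded_ind (wo_wf W)).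
  destruct (Hg w) as [H0 [H1 H2]].
  destruct (classic (exists v, wo_lt W v w)) as [Hex|Hnex].
  - destruct (classic (exists v, wo_lt W v w /\
        forall u, ~ (wo_lt W v u /\ wo_lt W u w))) as [[v [Hv Hi]]|Hno].
    + rewrite (H1 v Hv Hi). intros i x hx.
      assert (HI : IsIterate Rr (g v)) by (exists W, g, v; split; auto).
      apply (proj1 (HR (g v) HI)). apply (mono _ _ (IH v Hv)).
      apply (Hs w v Hv Hi). exact hx.
    + assert (Hlim : forall v, wo_lt W v w -> exists u, wo_lt W v u /\ wo_lt W u w).
      { intros v Hv. apply NNPP; intro Hn. apply Hno. exists v; split; auto.
        intros u Hu. apply Hn. exists u; auto. }
      rewrite (H2 Hex Hlim). intros i x hx v Hv.
      apply (IH v Hv). apply (Hl w Hex Hlim v Hv). exact hx.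
  - rewrite H0; [intros; exact I|]. intros v hv. apply Hnex. eauto.
Qed.

Definition Bot : restr T := fun i x => forall Y, tower Y -> Y i x.

Lemma HB : tower Bot.
Proof. apply tw_meet. auto. Qed.

Lemma fixB : F Bot = Bot.
Proof.
  apply restr_ext; [apply contr|]. intros i x hx. apply hx. apply tw_step. exact HB.
Qed.

Lemma out_eq Rr : relaxation F Rr -> forall G, outcome Rr G -> G = Bot.
Proof.
  intros HR G [W [g [w [Hg [Hgw [HRG Hmin]]]]]].
  assert (HI : IsIterate Rr G) by (exists W, g, w; split; auto).
  destruct (HR G HI) as [_ [_ H3]]. pose proof (H3 HRG) as HGf.
  apply restr_ext.
  - intros i x hx Y HY. refine (fix_below G _ Y HY i x hx).
    rewrite HGf. intros ? ? h; exact h.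
  - rewrite <- Hgw. apply (domA Rr HR W g Hg (fun _ => Bot)).
    + intros. rewrite fixB. assumption.
    + intros. assumption.
Qed.

Lemma main_sec :
  (exists G : restr T,
      GSbar T p G = G /\
      (forall G' : restr T, GSbar T p G' = G' -> rsub T G' G) /\
      outcome (GSbar T p) G) /\
  order_independent (GSbar T p) /\
  (forall R : restr T -> restr T, relaxation (GSbar T p) R ->
     forall (W : wellorder) (f g : W -> restr T),
       IsIter (GSbar T p) W f -> IsIter R W g ->
       forall w : W, rsub T (f w) (g w)).
Proof.
  split; [|split].
  - exists Bot. split; [exact fixB|split].
    + intros G' HG i x hx Y HY. refine (fix_below G' _ Y HY i x hx).
      rewrite HG. intros ? ? h; exact h.
    + exists Wt, (fun a : Wt => proj1_sig a), (exist _ Bot HB).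
      split; [exact tower_iter|split; [reflexivity|split; [exact fixB|]]].
      intros [v Hv] [h1 h2] heq. simpl in *. apply h2.
      intros i x hx Y HY. refine (fix_below v _ Y HY i x hx).
      rewrite heq. intros ? ? h; exact h.
  - intros R1 R2 G1 G2 HR1 HR2 HO1 HO2.
    rewrite (out_eq R1 HR1 G1 HO1), (out_eq R2 HR2 G2 HO2). reflexivity.
  - intros Rr HR W f g Hf Hg w0. refine (domA Rr HR W g Hg f _ _ w0).
    + intros w v Hv Hi. rewrite (proj1 (proj2 (Hf w)) v Hv Hi).
      intros ? ? h; exact h.
    + intros w Hex Hlim v Hv. rewrite (proj2 (proj2 (Hf w)) Hex Hlim).
      intros i x hx. exact (hx v Hv).
Qed.

End S.

Theorem mainTheorem8 (n : nat) (T : Fin.t n -> Type)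
  (HT : forall i, inhabited (T i))
  (p : forall i : Fin.t n, (forall j, T j) -> R) :
  (* (i) the largest fixpoint of GS-bar exists and equals its outcome *)
  (exists G : restr T,
      GSbar T p G = G /\
      (forall G' : restr T, GSbar T p G' = G' -> rsub T G' G) /\
      outcome (GSbar T p) G) /\
  (* (ii) GS-bar is order independent *)
  order_independent (GSbar T p) /\
  (* (iii) GS-bar^alpha ⊆ R^alpha for every relaxation R and ordinal alpha *)
  (forall R : restr T -> restr T, relaxation (GSbar T p) R ->
     forall (W : wellorder) (f g : W -> restr T),
       IsIter (GSbar T p) W f -> IsIter R W g ->
       forall w : W, rsub T (f w) (g w)).
Proof.
  exact (main_sec n T p).
Qed.
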